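(* Let $k\geq 2$, let $A_1\subseteq A_2$ be sets, and let $F_1\colon[A_1]^k\to\mathcal{P}(A_1)$ and $F_2\colon[A_2]^k\to\mathcal{P}(A_2)$. Let $\Gamma_1,\Gamma_2$ be sets of functions such that $\Gamma_i$ $k$-generates $F_i$ for $i=1,2$, and suppose $\Gamma_2|_{A_1}=\Gamma_1$. Then for every $\bar\gamma\in[A_1]^k$ we have $F_1(\bar\gamma)=F_2(\bar\gamma)\cap A_1$.
   Context: For a set $S$ and $k<\omega$, $[S]^k$ is the set of $k$-element subsets of $S$. Let $A$ be a set and $k\geq 2$. Let $\Gamma$ be a set of functions of the form $\rho\colon[A]^2\to L_\rho$, where each $L_\rho$ is a linear order with order $<_\rho$ (formally $\Gamma$ is a set of pairs $(\rho,L_\rho)$). A map $F\colon[A]^k\to\mathcal{P}(A)$ is said to be $k$-generated by $\Gamma$ if for all $\bar\gamma\in[A]^k$: $x\in F(\bar\gamma)$ if and only if $x\in A$ and for every $\rho\in\Gamma$ and every $\gamma\in\bar\gamma$ there exist $\gamma'\neq\gamma''$ in $\bar\gamma$ with $\rho\{x,\gamma\}\leq_\rho\rho\{\gamma',\gamma''\}$. For $B\subseteq A$, $\Gamma|_B=\{\rho|_{[B]^2}:\rho\in\Gamma\}$ (each with the same linear order $L_\rho$). *)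

(* Defs.v *)
From Stdlib Require Import List.

Set Implicit Arguments.

Record linord := LinOrd {
  lo_car :> Type;
  lo_le : lo_car -> lo_car -> Prop;
  lo_refl : forall x, lo_le x x;
  lo_antisym : forall x y, lo_le x y -> lo_le y x -> x = y;
  lo_trans : forall x y z, lo_le x y -> lo_le y z -> lo_le x z;
  lo_total : forall x y, lo_le x y \/ lo_le y x
}.

Definition ksubset (T : Type) (A : T -> Prop) (k : nat) (S : T -> Prop) : Prop :=
  (forall x, S x -> A x) /\
  exists l : list T, NoDup l /\ length l = k /\ (forall x, S x <-> In x l).

Definition pair2 (T : Type) (x y : T) : T -> Prop := fun z => z = x \/ z = y.

(* A pair (rho, L_rho): rho is a function on 2-element subsets (only its
   values on elements of [A]^2 are meaningful). *)
Record coloring (T : Type) := Coloring {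
  col_L : linord;
  col_f : (T -> Prop) -> lo_car col_L
}.

(* F : [A]^k -> P(A) is k-generated by Gamma (a set of colorings).
   Convention: the clause for gamma = x (where {x,gamma} is not a pair)
   is vacuous. *)
Definition k_generated (T : Type) (k : nat) (A : T -> Prop)
    (Gamma : coloring T -> Prop) (F : (T -> Prop) -> (T -> Prop)) : Prop :=
  forall gbar, ksubset A k gbar ->
  forall x, F gbar x <->
    (A x /\
     forall rho, Gamma rho ->
     forall g, gbar g -> x <> g ->
     exists g' g'', gbar g' /\ gbar g'' /\ g' <> g'' /\
       lo_le (col_L rho) (col_f rho (pair2 x g)) (col_f rho (pair2 g' g''))).

Definition restrict_eq (T : Type) (B : T -> Prop) (rho sigma : coloring T) : Prop :=
  exists e : col_L rho = col_L sigma,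
    forall p, ksubset B 2 p ->
      eq_rect _ lo_car (col_f rho p) _ e = col_f sigma p.

Definition restrict_set_eq (T : Type) (B : T -> Prop)
    (Gamma Gamma' : coloring T -> Prop) : Prop :=
  (forall rho, Gamma rho -> exists sigma, Gamma' sigma /\ restrict_eq B rho sigma) /\
  (forall sigma, Gamma' sigma -> exists rho, Gamma rho /\ restrict_eq B rho sigma).

(* Main.v *)
Require Import Defs.
From Stdlib Require Import List.

Lemma transp (L1 L2 : linord) (e : L1 = L2) (a b : lo_car L1) :
  lo_le L1 a b <-> lo_le L2 (eq_rect _ lo_car a _ e) (eq_rect _ lo_car b _ e).
Proof. destruct e. simpl. tauto. Qed.

Lemma pair_ks (T : Type) (A : T -> Prop) x y :
  A x -> A y -> x <> y -> ksubset A 2 (pair2 x y).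
Proof.
  intros Hx Hy Hxy. split.
  - intros z [->| ->]; auto.
  - exists (x :: y :: nil). split; [|split; [reflexivity|]].
    + constructor. simpl. intros [H|[]]. auto. constructor. simpl; tauto. constructor.
    + intro z. unfold pair2. simpl. split.
      * intros [->| ->]; auto.
      * intros [<-|[<-|[]]]; auto.
Qed.

Theorem lemma2p4 (T : Type) (k : nat) (A1 A2 : T -> Prop)
    (F1 F2 : (T -> Prop) -> (T -> Prop))
    (Gamma1 Gamma2 : coloring T -> Prop) :
  2 <= k ->
  (forall x, A1 x -> A2 x) ->
  (forall gbar, ksubset A1 k gbar -> forall x, F1 gbar x -> A1 x) ->
  (forall gbar, ksubset A2 k gbar -> forall x, F2 gbar x -> A2 x) ->
  k_generated k A1 Gamma1 F1 ->
  k_generated k A2 Gamma2 F2 ->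
  restrict_set_eq A1 Gamma2 Gamma1 ->
  forall gbar, ksubset A1 k gbar ->
  forall x, F1 gbar x <-> (F2 gbar x /\ A1 x).
Proof.
  intros Hk H12 _ _ G1 G2 [R1 R2] gbar Hg x.
  assert (Hg2 : ksubset A2 k gbar).
  { destruct Hg as [Hs Hl]. split; auto. }
  pose proof (G1 gbar Hg x) as E1. pose proof (G2 gbar Hg2 x) as E2.
  destruct Hg as [Hs _].
  split.
  - intro HF. apply E1 in HF. destruct HF as [Ax HF].
    split; [|exact Ax]. apply E2. split; [auto|].
    intros rho Hrho g Hgg Hxg.
    destruct (R1 rho Hrho) as [sigma [Hsig [e He]]].
    destruct (HF sigma Hsig g Hgg Hxg) as [g' [g'' [H1 [H2 [H3 H4]]]]].
    exists g', g''. repeat split; auto.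
    apply (@transp _ _ e). rewrite !He; auto using pair_ks.
  - intros [HF Ax]. apply E2 in HF. destruct HF as [_ HF].
    apply E1. split; [exact Ax|].
    intros sigma Hsig g Hgg Hxg.
    destruct (R2 sigma Hsig) as [rho [Hrho [e He]]].
    destruct (HF rho Hrho g Hgg Hxg) as [g' [g'' [H1 [H2 [H3 H4]]]]].
    exists g', g''. repeat split; auto.
    apply (@transp _ _ e) in H4. rewrite !He in H4; auto using pair_ks.
Qed.
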